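(* For integers $n\ge 0$ and $k\ge 1$, $$\mathfrak C_{2n}^{(k)}=(-4)^n(n!)^2\int_0^1\cdots\int_0^1\binom{\frac{x_1x_2\cdots x_k}{2}}{n}\binom{-\frac{x_1x_2\cdots x_k}{2}}{n}\,dx_1\,dx_2\cdots dx_k,$$ where the integral is $k$-fold.
   Context: For an integer $k$, ${\rm Lif}_{2,k}(z)=\sum_{m=0}^\infty\frac{z^{2m}}{(2m)!(2m+1)^k}$, and the poly-Cauchy numbers with level $2$, $\mathfrak C_n^{(k)}$, are defined by ${\rm Lif}_{2,k}({\rm arcsinh}\,t)=\sum_{n=0}^\infty\mathfrak C_n^{(k)}\frac{t^n}{n!}$. For real $y$, $\binom{y}{n}=\frac{y(y-1)\cdots(y-n+1)}{n!}$. *)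

(* Defs.v *)
From Stdlib Require Import Reals Lra Lia ZArith List.
From Coquelicot Require Import Coquelicot.
Open Scope R_scope.

Definition Lif2 (k : Z) (z : R) : R :=
  Series (fun m : nat => z ^ (2 * m) / (INR (fact (2 * m)) * powerRZ (INR (2 * m + 1)) k)).

(* Poly-Cauchy numbers with level 2: Lif_{2,k}(arcsinh t) = sum_n C_n t^n / n!,
   i.e. C_n is the n-th derivative at t = 0 of t |-> Lif_{2,k}(arcsinh t). *)
Definition polyCauchy2 (k : Z) (n : nat) : R :=
  Derive_n (fun t => Lif2 k (arcsinh t)) n 0.

Fixpoint falling (y : R) (n : nat) : R :=
  match n with
  | O => 1
  | S m => falling y m * (y - INR m)
  end.
Definition gbinom (y : R) (n : nat) : R := falling y n / INR (fact n).

Fixpoint cube_int (k : nat) (F : list R -> R) : R :=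
  match k with
  | O => F nil
  | S k' => RInt (fun x => cube_int k' (fun l => F (x :: l))) 0 1
  end.

Definition prodR (l : list R) : R := fold_right Rmult 1 l.

(* Main.v *)
Require Import Defs.
From Stdlib Require Import Reals ZArith List.
From Coquelicot Require Import Coquelicot.
From Stdlib Require Import Lra Lia.
Open Scope R_scope.



Fixpoint cf (j m : nat) {struct j} : R :=
  match j with
  | O => match m with O => 1 | _ => 0 end
  | S O => 0
  | S (S j') => ((match m with O => 0 | S m' => cf j' m' end) - INR j' ^ 2 * cf j' m)
                / (INR (S j') * INR (S (S j')))
  end.

Definition cfp (j m : nat) : R := match m with O => 0 | S m' => cf j m' end.

Lemma cf_SS j m : cf (S (S j)) m = (cfp j m - INR j ^ 2 * cf j m) / (INR (S j) * INR (S (S j))).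
Proof. reflexivity. Qed.

Lemma cf_bound_step (a b x : R) : 0 <= x -> Rabs a <= 1 -> Rabs b <= 1 ->
  Rabs ((a - x ^ 2 * b) / ((x + 1) * (x + 2))) <= 1.
Proof.
  intros Hx Ha Hb.
  assert (Hp : 0 < (x + 1) * (x + 2)) by nra.
  unfold Rdiv. rewrite Rabs_mult, Rabs_inv, (Rabs_pos_eq ((x+1)*(x+2))) by lra.
  apply (Rmult_le_reg_r ((x + 1) * (x + 2))); auto.
  rewrite Rmult_assoc, Rinv_l by lra. rewrite Rmult_1_r, Rmult_1_l.
  eapply Rle_trans. apply Rabs_triang. rewrite Rabs_Ropp, Rabs_mult.
  rewrite (Rabs_pos_eq (x^2)) by nra.
  assert (x^2 * Rabs b <= x^2 * 1) by (apply Rmult_le_compat_l; nra). nra.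
Qed.

Lemma cf_all (P : nat -> nat -> Prop) :
  (forall m, P 0%nat m) -> (forall m, P 1%nat m) ->
  (forall j, (forall m, P j m) -> forall m, P (S (S j)) m) -> forall j m, P j m.
Proof.
  intros H0 H1 HS.
  assert (forall j, (forall m, P j m) /\ (forall m, P (S j) m)).
  { induction j as [|j [IH1 IH2]]. split; auto. split; auto. }
  intros j m. apply H.
Qed.

Lemma cf_bound j m : Rabs (cf j m) <= 1.
Proof.
  revert j m.
  assert (H : forall j, (forall m, Rabs (cf j m) <= 1) /\ (forall m, Rabs (cf (S j) m) <= 1)).
  { induction j as [|j [IH1 IH2]].
    - split; intros m; simpl; destruct m; rewrite ?Rabs_R1, ?Rabs_R0; lra.
    - split; auto. intros m. rewrite cf_SS.
      replace (INR (S (S j))) with (INR j + 2) by (rewrite !S_INR; ring).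
      rewrite S_INR. apply cf_bound_step; auto. apply pos_INR.
      unfold cfp; destruct m; auto. rewrite Rabs_R0; lra. }
  intros j m; apply H.
Qed.

Lemma cf_zero j m : (j < m)%nat -> cf j m = 0.
Proof.
  revert j m.
  assert (H : forall j, (forall m, (j < m)%nat -> cf j m = 0) /\ (forall m, (S j < m)%nat -> cf (S j) m = 0)).
  { induction j as [|j [IH1 IH2]].
    - split; intros m Hm; simpl; auto. destruct m; [lia|auto].
    - split; auto. intros m Hm. rewrite cf_SS. unfold cfp. destruct m as [|m']; [lia|].
      rewrite IH1 by lia. rewrite IH1 by lia. unfold Rdiv. ring. }
  intros j m; apply H.
Qed.

Fixpoint prodP (n : nat) (y : R) : R :=
  match n with O => 1 | S n' => prodP n' y * (y - 4 * INR n' ^ 2) end.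

Lemma sum_f_R0_ext (f g : nat -> R) N : (forall i, (i <= N)%nat -> f i = g i) -> sum_f_R0 f N = sum_f_R0 g N.
Proof. intros H. apply sum_eq. auto. Qed.

Lemma sum_shift (g : nat -> R) N :
  sum_f_R0 (fun m => match m with O => 0 | S m' => g m' end) (S N) = sum_f_R0 g N.
Proof.
  induction N. simpl. ring. rewrite tech5, IHN. simpl. ring.
Qed.

Lemma fact_rel n : INR (fact (S (S (2 * n)))) = INR (fact (2*n)) * (INR (S (2*n)) * INR (S (S (2*n)))).
Proof. rewrite (fact_simpl (S (2*n))), (fact_simpl (2*n)), !mult_INR. ring. Qed.

Lemma prodP_sum n y N : (2 * n <= N)%nat ->
  prodP n y = sum_f_R0 (fun m => INR (fact (2 * n)) * cf (2 * n) m * y ^ m) N.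
Proof.
  revert N. induction n as [|n IH]; intros N HN.
  - simpl. destruct N. simpl. ring.
    rewrite decomp_sum by lia. simpl. rewrite sum_eq_R0. ring. intros. ring.
  - simpl prodP.
    assert (E : forall m, INR (fact (2 * S n)) * cf (2 * S n) m * y ^ m =
       INR (fact (2 * n)) * cfp (2 * n) m * y ^ m - 4 * INR n ^ 2 * (INR (fact (2 * n)) * cf (2 * n) m * y ^ m)).
    { intros m. replace (2 * S n)%nat with (S (S (2 * n))) by lia.
      rewrite fact_rel, cf_SS, mult_INR. simpl (INR 2).
      assert (0 < INR (S (2 * n))) by (apply lt_0_INR; lia).
      assert (0 < INR (S (S (2 * n)))) by (apply lt_0_INR; lia).
      field. lra. }

    rewrite (sum_f_R0_ext _ _ N (fun m _ => E m)).
    unfold Rminus. rewrite plus_sum.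
    destruct N as [|N]; [lia|].
    assert (Sh : sum_f_R0 (fun m => INR (fact (2 * n)) * cfp (2 * n) m * y ^ m) (S N)
       = y * sum_f_R0 (fun m => INR (fact (2 * n)) * cf (2 * n) m * y ^ m) N).
    { transitivity (sum_f_R0 (fun m => match m with O => 0 | S m' => 
          (INR (fact (2 * n)) * cf (2 * n) m' * y ^ m') * y end) (S N)).
      apply sum_f_R0_ext. intros [|i] _; unfold cfp; simpl; ring.
      rewrite sum_shift, scal_sum. reflexivity. }
    rewrite Sh.
    assert (Hs : forall c (f : nat -> R) N, sum_f_R0 (fun i => - (c * f i)) N = - c * sum_f_R0 f N).
    { intros c f M. induction M; simpl; [ring|rewrite IHM; ring]. }
    rewrite Hs, <- !IH by lia. ring.
Qed.

Lemma falling_prod n y : (-4) ^ n * (falling y n * falling (- y) n) = prodP n (4 * y ^ 2).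
Proof.
  induction n. simpl. ring.
  change ((-4) ^ S n) with ((-4) * (-4) ^ n). change (falling y (S n)) with (falling y n * (y - INR n)).
  change (falling (-y) (S n)) with (falling (-y) n * (-y - INR n)).
  replace ((-4) * (-4) ^ n * (falling y n * (y - INR n) * (falling (- y) n * (- y - INR n))))
    with ((-4) ^ n * (falling y n * falling (- y) n) * (4 * y ^ 2 - 4 * INR n ^ 2)) by ring.
  rewrite IHn. reflexivity.
Qed.



Lemma is_RInt_mono a d : is_RInt (fun x => a * x ^ d) 0 1 (a / INR (S d)).
Proof.
  assert (HS : 0 < INR (S d)) by (apply lt_0_INR; lia).
  assert (H := is_RInt_derive (fun x => a * x ^ (S d) / INR (S d)) (fun x => a * x ^ d) 0 1).
  replace (a / INR (S d)) with (minus (a * 1 ^ (S d) / INR (S d)) (a * 0 ^ (S d) / INR (S d))).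
  apply H.
  - intros x _. auto_derive. auto. change (match d with 0%nat => 1 | S _ => INR d + 1 end) with (INR (S d)). field. lra.
  - intros x _. apply (ex_derive_continuous (fun x => a * x ^ d)). auto_derive. auto.
  - rewrite pow1, pow_i by lia. unfold minus, plus, opp; simpl. simpl in HS. field. lra.
Qed.

Lemma is_RInt_poly (a : nat -> R) (d : nat -> nat) N :
  is_RInt (fun x => sum_f_R0 (fun m => a m * x ^ (d m)) N) 0 1
          (sum_f_R0 (fun m => a m / INR (S (d m))) N).
Proof.
  induction N.
  - simpl. apply is_RInt_mono.
  - simpl. exact (is_RInt_plus _ _ _ _ _ _ IHN (is_RInt_mono (a (S N)) (d (S N)))).
Qed.

Lemma cube_int_ext k (F G : list R -> R) : (forall xs, F xs = G xs) -> cube_int k F = cube_int k G.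
Proof.
  revert F G; induction k; intros F G H; simpl. apply H.
  apply RInt_ext. intros x _. apply IHk. intros; apply H.
Qed.



Lemma cube_poly k : forall (c : R) (a : nat -> R) (d : nat -> nat) N,
  cube_int k (fun xs => sum_f_R0 (fun m => a m * (c * prodR xs) ^ (d m)) N)
  = sum_f_R0 (fun m => a m * c ^ (d m) / INR (S (d m)) ^ k) N.
Proof.
  induction k; intros c a d N.
  - cbn [cube_int]. change (prodR nil) with 1. apply sum_f_R0_ext. intros i _.
    rewrite Rmult_1_r, pow_O. unfold Rdiv; rewrite Rinv_1, Rmult_1_r. reflexivity.
  - cbn [cube_int].
    rewrite (RInt_ext _ (fun x => sum_f_R0 (fun m => (a m * c ^ (d m) / INR (S (d m)) ^ k) * x ^ (d m)) N)).
    + rewrite (is_RInt_unique _ _ _ _ (is_RInt_poly _ _ _)). apply sum_f_R0_ext; intros i _.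
      assert (0 < INR (S (d i))) by (apply lt_0_INR; lia).
      rewrite <- tech_pow_Rmult. field. split. apply pow_nonzero. lra. lra.
    + intros x _. 
      rewrite (cube_int_ext k _ (fun l => sum_f_R0 (fun m => a m * ((c * x) * prodR l) ^ (d m)) N)).
      * rewrite IHk. apply sum_f_R0_ext; intros i _. rewrite Rpow_mult_distr.
        assert (0 < INR (S (d i))) by (apply lt_0_INR; lia).
        field. apply pow_nonzero. lra.
      * intros l. apply sum_f_R0_ext; intros i _. change (prodR (x :: l)) with (x * prodR l).
        rewrite Rmult_assoc. reflexivity.
Qed.



Lemma radius_cf m : Rbar_le 1 (CV_radius (fun j => cf j m)).
Proof.
  apply (proj1 (CV_radius_bounded _)). exists 1. intros n. rewrite pow1, Rmult_1_r. apply cf_bound.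
Qed.

Lemma in_rad (a : nat -> R) x : Rbar_le 1 (CV_radius a) -> Rabs x < 1 -> Rbar_lt (Rabs x) (CV_radius a).
Proof. intros H1 H2. eapply Rbar_lt_le_trans; [|exact H1]. exact H2. Qed.

Lemma ode_coef m t : Rabs t < 1 ->
  (1 + t ^ 2) * PSeries (PS_derive (PS_derive (fun j => cf j m))) t
  + t * PSeries (PS_derive (fun j => cf j m)) t = PSeries (fun j => cfp j m) t.
Proof.
  intros Ht.
  set (a := fun j => cf j m).
  assert (R0 : Rbar_lt (Rabs t) (CV_radius a)) by (apply in_rad; [apply radius_cf|auto]).
  assert (E1 : ex_pseries (PS_derive a) t) by (apply CV_radius_inside; rewrite CV_radius_derive; auto).
  assert (E2 : ex_pseries (PS_derive (PS_derive a)) t) by (apply CV_radius_inside; rewrite !CV_radius_derive; auto).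
  set (D1 := PS_derive a) in *. set (D2 := PS_derive D1) in *.
  replace ((1 + t ^ 2) * PSeries D2 t + t * PSeries D1 t) with
    (PSeries D2 t + PSeries (PS_incr_n D2 2) t + PSeries (PS_incr_1 D1) t)
    by (rewrite PSeries_incr_n, PSeries_incr_1; ring).
  rewrite <- PSeries_plus by (auto; apply ex_pseries_incr_n; auto).
  rewrite <- PSeries_plus by (try apply ex_pseries_plus; try apply ex_pseries_incr_n; try apply ex_pseries_incr_1; auto).
  apply PSeries_ext. intros j.
  unfold PS_plus, PS_incr_n, PS_incr_1, D2, D1, PS_derive, a. unfold plus, zero.
  destruct j as [|[|j]]; cbn -[cf INR].
  - rewrite cf_SS. simpl INR. field.
  - rewrite cf_SS. change (cf 1 m) with 0. simpl INR. field.
  - rewrite (cf_SS (S (S j))). rewrite !S_INR. pose proof (pos_INR j). field. lra.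
Qed.

Lemma d_sinh u : is_derive sinh u (cosh u).
Proof. apply is_derive_Reals, derivable_pt_lim_sinh. Qed.
Lemma d_cosh u : is_derive cosh u (sinh u).
Proof. apply is_derive_Reals, derivable_pt_lim_cosh. Qed.

Lemma cosh2 u : cosh u * cosh u = 1 + sinh u ^ 2.
Proof. unfold cosh, sinh. rewrite exp_Ropp. pose proof (exp_pos u). field. lra. Qed.

Lemma d_hE (a : nat -> R) u : Rbar_lt (Rabs (sinh u)) (CV_radius a) ->
  is_derive (fun u => PSeries a (sinh u)) u (PSeries (PS_derive a) (sinh u) * cosh u).
Proof.
  intros H. rewrite Rmult_comm.
  exact (is_derive_comp (PSeries a) sinh u _ _ (is_derive_PSeries a (sinh u) H) (d_sinh u)).
Qed.

Lemma d_h1 (a : nat -> R) u : Rbar_lt (Rabs (sinh u)) (CV_radius a) ->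
  is_derive (fun u => PSeries (PS_derive a) (sinh u) * cosh u) u
    (PSeries (PS_derive (PS_derive a)) (sinh u) * (cosh u * cosh u) + PSeries (PS_derive a) (sinh u) * sinh u).
Proof.
  intros H.
  assert (H' : Rbar_lt (Rabs (sinh u)) (CV_radius (PS_derive a))) by (rewrite CV_radius_derive; auto).
  assert (K := is_derive_mult _ _ u _ _ (d_hE _ u H') (d_cosh u) Rmult_comm).
  replace (PSeries (PS_derive (PS_derive a)) (sinh u) * (cosh u * cosh u) + PSeries (PS_derive a) (sinh u) * sinh u)
    with (plus (mult (PSeries (PS_derive (PS_derive a)) (sinh u) * cosh u) (cosh u)) (mult (PSeries (PS_derive a) (sinh u)) (sinh u))).
  exact K. unfold plus, mult; simpl. ring.
Qed.

Lemma const_on (f df : R -> R) lo hi : lo < 0 < hi ->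
  (forall u, lo < u < hi -> is_derive f u (df u)) -> (forall u, lo < u < hi -> df u = 0) ->
  forall u, lo < u < hi -> f u = f 0.
Proof.
  intros H0 Hd Hz u Hu.
  destruct (MVT_gen f 0 u df) as [c [Hc Hm]].
  - intros x Hx. apply Hd. unfold Rmin, Rmax in Hx. destruct (Rle_dec 0 u); lra.
  - intros x Hx. apply continuity_pt_filterlim. apply (ex_derive_continuous f). exists (df x).
    apply Hd. unfold Rmin, Rmax in Hx. destruct (Rle_dec 0 u); lra.
  - rewrite Hz in Hm. lra. unfold Rmin, Rmax in Hc. destruct (Rle_dec 0 u); lra.
Qed.

Definition Q (m : nat) (u : R) : R := u ^ (2 * m) / INR (fact (2 * m)).
Definition Q1 (m : nat) (u : R) : R := match m with O => 0 | S m' => u ^ (S (2 * m')) / INR (fact (S (2 * m'))) end.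
Definition Qp (m : nat) (u : R) : R := match m with O => 0 | S m' => Q m' u end.

Lemma dpow n u : is_derive (fun u => u ^ (S n) / INR (fact (S n))) u (u ^ n / INR (fact n)).
Proof.
  assert (0 < INR (fact n)) by (apply lt_0_INR, lt_O_fact).
  assert (0 < INR (S n)) by (apply lt_0_INR; lia).
  apply (is_derive_ext (fun u => / INR (fact (S n)) * ((fun x => x) u ^ S n))); [intros t; unfold Rdiv; apply Rmult_comm|].
  replace (u ^ n / INR (fact n)) with (/ INR (fact (S n)) * (INR (S n) * 1 * u ^ pred (S n))).
  apply (is_derive_scal (fun x => x ^ S n)), (is_derive_pow (fun x => x)). apply (is_derive_id (K := R_AbsRing)).
  rewrite fact_simpl, mult_INR. simpl pred. field. lra.
Qed.

Lemma dQ m u : is_derive (Q m) u (Q1 m u).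
Proof.
  destruct m as [|m].
  - apply (is_derive_ext (fun _ => 1)); [intros; unfold Q; simpl; field|].
    apply is_derive_Reals. exact (derivable_pt_lim_const 1 u).
  - apply (is_derive_ext (fun u => u ^ (S (S (2 * m))) / INR (fact (S (S (2 * m)))))).
    2: apply dpow.
    intros; unfold Q; replace (2 * S m)%nat with (S (S (2 * m))) by lia; reflexivity.
Qed.

Lemma dQ1 m u : is_derive (Q1 m) u (Qp m u).
Proof.
  destruct m as [|m].
  - apply is_derive_Reals. exact (derivable_pt_lim_const 0 u).
  - apply dpow.
Qed.

Definition lo := arcsinh (- (1/2)).
Definition hi := arcsinh (1/2).

Lemma lohi : lo < 0 < hi.
Proof. unfold lo, hi. rewrite <- arcsinh_0. split; apply arcsinh_lt; lra. Qed.

Lemma sinh_in u : lo < u < hi -> Rabs (sinh u) < 1.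
Proof.
  intros [H1 H2]. apply sinh_lt in H1. apply sinh_lt in H2. unfold lo, hi in *.
  rewrite sinh_arcsinh in H1, H2. apply Rabs_def1; lra.
Qed.

Lemma E_eq_gen m :
  (forall u, lo < u < hi -> PSeries (fun j => cfp j m) (sinh u) = Qp m u) ->
  forall u, lo < u < hi -> PSeries (fun j => cf j m) (sinh u) = Q m u.
Proof.
  intros IHp.
  set (a := fun j => cf j m).
  assert (Rad : forall u, lo < u < hi -> Rbar_lt (Rabs (sinh u)) (CV_radius a)).
  { intros u Hu. apply in_rad. apply radius_cf. apply sinh_in; auto. }
  pose proof lohi as LH.
  set (w1 := fun u => PSeries (PS_derive a) (sinh u) * cosh u - Q1 m u).
  assert (HA : forall u, lo < u < hi -> w1 u = w1 0).
  { apply (const_on w1 (fun u => (PSeries (PS_derive (PS_derive a)) (sinh u) * (cosh u * cosh u)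
                + PSeries (PS_derive a) (sinh u) * sinh u) - Qp m u) lo hi LH).
    - intros u Hu. exact (is_derive_minus _ _ _ _ _ (d_h1 a u (Rad u Hu)) (dQ1 m u)).
    - intros u Hu. rewrite cosh2.
      replace (PSeries (PS_derive (PS_derive a)) (sinh u) * (1 + sinh u ^ 2) +
               PSeries (PS_derive a) (sinh u) * sinh u)
        with ((1 + sinh u ^ 2) * PSeries (PS_derive (PS_derive a)) (sinh u) +
               sinh u * PSeries (PS_derive a) (sinh u)) by ring.
      unfold a. rewrite ode_coef by (apply sinh_in; auto). rewrite IHp by auto. ring. }
  assert (HA0 : w1 0 = 0).
  { unfold w1. rewrite sinh_0, cosh_0, PSeries_0. unfold PS_derive, a. change (cf 1 m) with 0.
    destruct m; simpl Q1; unfold Rdiv; ring. }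
  set (w := fun u => PSeries a (sinh u) - Q m u).
  assert (HB : forall u, lo < u < hi -> w u = w 0).
  { apply (const_on w w1 lo hi LH).
    - intros u Hu. exact (is_derive_minus _ _ _ _ _ (d_hE a u (Rad u Hu)) (dQ m u)).
    - intros u Hu. rewrite HA by auto. exact HA0. }
  assert (HB0 : w 0 = 0).
  { unfold w. rewrite sinh_0, PSeries_0. unfold a, Q. destruct m.
    simpl. field. replace (2 * S m)%nat with (S (S (2 * m))) by lia. rewrite pow_i by lia. simpl cf. unfold Rdiv. ring. }
  intros u Hu. specialize (HB u Hu). unfold w in HB, HB0. fold a. lra.
Qed.

Lemma E_eq m : forall u, lo < u < hi -> PSeries (fun j => cf j m) (sinh u) = Q m u.
Proof.
  induction m as [|m IH]; apply E_eq_gen; intros u Hu.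
  - rewrite (PSeries_ext _ (fun _ => 0)) by (intros; reflexivity). rewrite PSeries_const_0. reflexivity.
  - simpl Qp. rewrite <- IH by auto. apply PSeries_ext. intros; reflexivity.
Qed.



Definition alpha (k m : nat) : R := / INR (S (2 * m)) ^ k.
Definition bb (k j : nat) : R := sum_f_R0 (fun m => alpha k m * cf j m) j.

Lemma alpha_bound k m : 0 < alpha k m <= 1.
Proof.
  unfold alpha. assert (H1 : 1 <= INR (S (2 * m))) by (rewrite S_INR; pose proof (pos_INR (2*m)); lra).
  assert (H2 : 1 <= INR (S (2 * m)) ^ k) by (apply pow_R1_Rle; auto).
  split. apply Rinv_0_lt_compat; lra.
  rewrite <- Rinv_1. apply Rinv_le_contravar; lra.
Qed.

Lemma sum_le_const (f : nat -> R) c N : (forall i, Rabs (f i) <= c) -> Rabs (sum_f_R0 f N) <= INR (S N) * c.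
Proof.
  intros H. induction N; simpl sum_f_R0.
  - simpl INR. rewrite Rmult_1_l. auto.
  - eapply Rle_trans. apply Rabs_triang. rewrite (S_INR (S N)). specialize (H (S N)). lra.
Qed.

Lemma pow2_ge j : INR (S j) <= 2 ^ j.
Proof.
  induction j. simpl; lra. rewrite (S_INR (S j)), <- tech_pow_Rmult. rewrite S_INR in *. pose proof (pos_INR j). lra.
Qed.

Lemma bb_bound k j : Rabs (bb k j) <= INR (S j).
Proof.
  unfold bb. replace (INR (S j)) with (INR (S j) * 1) by ring. apply sum_le_const.
  intros i. rewrite Rabs_mult. pose proof (alpha_bound k i). pose proof (cf_bound j i).
  rewrite Rabs_pos_eq by lra. pose proof (Rabs_pos (cf j i)). nra.
Qed.

Lemma radius_bb k : Rbar_le (1/2) (CV_radius (bb k)).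
Proof.
  apply (proj1 (CV_radius_bounded _)). exists 1. intros n.
  rewrite Rabs_mult, (Rabs_pos_eq ((1/2)^n)) by (apply pow_le; lra).
  pose proof (bb_bound k n). pose proof (pow2_ge n).
  assert (E : (1/2)^n * 2^n = 1) by (rewrite <- Rpow_mult_distr; replace (1/2*2) with 1 by field; apply pow1).
  assert (0 <= (1/2)^n) by (apply pow_le; lra). nra.
Qed.

Lemma tail_bound (f : nat -> R) M : (forall j, Rabs (f j) <= (1/4) ^ j) ->
  Rabs (Series f - sum_f_R0 f M) <= (1/4) ^ (S M) * (4/3).
Proof.
  intros H.
  assert (G : Rabs (1/4) < 1) by (rewrite Rabs_pos_eq; lra).
  assert (Ex : ex_series f).
  { apply ex_series_Rabs. apply (@ex_series_le R_AbsRing R_CompleteNormedModule _ (fun n => (1/4)^n)). intros n.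
    change (norm (Rabs (f n))) with (Rabs (Rabs (f n))). rewrite Rabs_Rabsolu. auto.
    apply ex_series_geom; auto. }
  rewrite (Series_incr_n f (S M)) by (lia || auto). simpl pred.
  replace (sum_f_R0 f M + Series (fun k => f (S M + k)%nat) - sum_f_R0 f M)
    with (Series (fun k => f (S M + k)%nat)) by ring.
  assert (Hg : forall k, Rabs (f (S M + k)%nat) <= (1/4)^(S M) * (1/4)^k) by (intros; rewrite <- pow_add; auto).
  assert (Ex2 : ex_series (fun k => (1/4)^(S M) * (1/4)^k)) by exact (@ex_series_scal_l R_AbsRing R_NormedModule _ _ (ex_series_geom _ G)).
  assert (Ex3 : ex_series (fun k => Rabs (f (S M + k)%nat))).
  { refine (@ex_series_le R_AbsRing R_CompleteNormedModule _ _ _ Ex2). intros n.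
    change (norm (Rabs (f (S M + n)%nat))) with (Rabs (Rabs (f (S M + n)%nat))). rewrite Rabs_Rabsolu. auto. }
  eapply Rle_trans. apply Series_Rabs; auto.
  eapply Rle_trans. apply (Series_le _ _ (fun n => conj (Rabs_pos _) (Hg n)) Ex2).
  rewrite Series_scal_l, Series_geom by auto. right. field.
Qed.

Lemma swap_tri (u : nat -> nat -> R) M : (forall m j, (j < m)%nat -> u m j = 0) ->
  sum_f_R0 (fun m => sum_f_R0 (fun j => u m j) M) M = sum_f_R0 (fun j => sum_f_R0 (fun m => u m j) j) M.
Proof.
  intros Hz. induction M.
  - reflexivity.
  - simpl sum_f_R0 at 1. rewrite plus_sum. rewrite IHM.
    simpl sum_f_R0 at 4.
    assert (Z : sum_f_R0 (fun j => u (S M) j) M = 0).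
    { apply sum_eq_R0. intros; apply Hz; lia. }
    simpl sum_f_R0. rewrite Z. ring.
Qed.

Lemma fub k t : Rabs t < 1/4 ->
  is_series (fun m => alpha k m * PSeries (fun j => cf j m) t) (PSeries (bb k) t).
Proof.
  intros Ht.
  set (V := fun m => alpha k m * PSeries (fun j => cf j m) t).
  set (B := fun M => sum_f_R0 (fun j => bb k j * t ^ j) M).
  assert (HB : is_lim_seq B (PSeries (bb k) t)).
  { assert (Ex : ex_series (fun j => bb k j * t ^ j)).
    { apply ex_pseries_R. apply CV_radius_inside. eapply Rbar_lt_le_trans; [|apply radius_bb].
      simpl. lra. }
    apply (is_lim_seq_ext (sum_n (fun j => bb k j * t ^ j))). intros; apply sum_n_Reals.
    exact (Series_correct _ Ex). }
  assert (Hf : forall m j, Rabs (cf j m * t ^ j) <= (1/4) ^ j).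
  { intros m j. rewrite Rabs_mult, <- RPow_abs. pose proof (cf_bound j m).
    assert (Rabs t ^ j <= (1/4) ^ j) by (apply pow_incr; split; [apply Rabs_pos|lra]).
    assert (0 <= Rabs t ^ j) by (apply pow_le, Rabs_pos). pose proof (Rabs_pos (cf j m)). nra. }
  assert (Hdiff : forall M, Rabs (sum_f_R0 V M - B M) <= (4/3) * (1/2) ^ (S M)).
  { intros M.
    assert (E1 : sum_f_R0 V M = sum_f_R0 (fun m => sum_f_R0 (fun j => alpha k m * cf j m * t ^ j) M) M
       + sum_f_R0 (fun m => alpha k m * (PSeries (fun j => cf j m) t - sum_f_R0 (fun j => cf j m * t ^ j) M)) M).
    { rewrite <- plus_sum. apply sum_eq. intros m _. unfold V.
      replace (sum_f_R0 (fun j => alpha k m * cf j m * t ^ j) M) with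
        (alpha k m * sum_f_R0 (fun j => cf j m * t ^ j) M).
      ring. rewrite scal_sum. apply sum_eq. intros; ring. }
    assert (E2 : sum_f_R0 (fun m => sum_f_R0 (fun j => alpha k m * cf j m * t ^ j) M) M = B M).
    { rewrite (swap_tri (fun m j => alpha k m * cf j m * t ^ j)).
      unfold B, bb. apply sum_eq. intros j _. rewrite <- scal_sum. ring.
      intros m j Hjm. rewrite cf_zero by auto. ring. }
    rewrite E1, E2. replace (B M + _ - B M) with
      (sum_f_R0 (fun m => alpha k m * (PSeries (fun j => cf j m) t - sum_f_R0 (fun j => cf j m * t ^ j) M)) M) by ring.
    eapply Rle_trans. apply (sum_le_const _ ((1/4) ^ (S M) * (4/3))).
    - intros m. rewrite Rabs_mult. pose proof (alpha_bound k m).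
      rewrite (Rabs_pos_eq (alpha k m)) by lra.
      assert (T := tail_bound (fun j => cf j m * t ^ j) M (Hf m)). unfold PSeries.
      pose proof (Rabs_pos (Series (fun j => cf j m * t ^ j) - sum_f_R0 (fun j => cf j m * t ^ j) M)).
      nra.
    - pose proof (pow2_ge (S M)).
      assert (E : (1/4) ^ (S M) = (1/2) ^ (S M) * (1/2) ^ (S M))
        by (rewrite <- Rpow_mult_distr; f_equal; field).
      assert (E' : (1/2) ^ (S M) * 2 ^ (S M) = 1)
        by (rewrite <- Rpow_mult_distr; replace (1/2*2) with 1 by field; apply pow1).
      assert (0 <= (1/2) ^ (S M)) by (apply pow_le; lra).
      rewrite E.
      assert (Hn : INR (S M) <= 2 ^ (S M)).
      { pose proof (pow2_ge M). rewrite <- tech_pow_Rmult. assert (1 <= 2 ^ M) by (apply pow_R1_Rle; lra). lra. }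
      assert (HX : INR (S M) * (1/2) ^ (S M) <= 1).
      { apply (Rle_trans _ (2 ^ (S M) * (1/2) ^ (S M))). apply Rmult_le_compat_r; lra. lra. }
      nra. }
  assert (Hlim0 : is_lim_seq (fun M => sum_f_R0 V M - B M) 0).
  { apply (is_lim_seq_le_le (fun M => - ((4/3) * (1/2) ^ (S M))) _ (fun M => (4/3) * (1/2) ^ (S M))).
    - intros M. specialize (Hdiff M). apply Rabs_le_between in Hdiff. lra.
    - replace (Finite 0) with (Rbar_mult (-(4/3)) 0) by (simpl; f_equal; ring).
      apply (is_lim_seq_ext (fun M => (-(4/3)) * (1/2) ^ (S M))). intros; ring.
      apply is_lim_seq_scal_l. apply (is_lim_seq_incr_1 (fun n => (1/2)^n)).
      apply is_lim_seq_geom. rewrite Rabs_pos_eq; lra.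
    - replace (Finite 0) with (Rbar_mult (4/3) 0) by (simpl; f_equal; ring).
      apply is_lim_seq_scal_l. apply (is_lim_seq_incr_1 (fun n => (1/2)^n)).
      apply is_lim_seq_geom. rewrite Rabs_pos_eq; lra. }
  assert (HL := is_lim_seq_plus' _ _ _ _ HB Hlim0).
  rewrite Rplus_0_r in HL.
  apply (is_lim_seq_ext _ (sum_n V)) in HL.
  exact HL.
  intros M. rewrite sum_n_Reals. ring.
Qed.



Lemma g_eq k t : Rabs t < 1/4 -> Lif2 (Z.of_nat k) (arcsinh t) = PSeries (bb k) t.
Proof.
  intros Ht. unfold Lif2. rewrite <- (is_series_unique _ _ (fub k t Ht)). apply Series_ext. intros m.
  assert (Hin : lo < arcsinh t < hi).
  { apply Rabs_def2 in Ht. unfold lo, hi. split; apply arcsinh_lt; lra. }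
  pose proof (E_eq m (arcsinh t) Hin) as HE. rewrite sinh_arcsinh in HE. rewrite HE.
  unfold Q, alpha. rewrite <- pow_powerRZ. rewrite Nat.add_1_r.
  assert (0 < INR (fact (2 * m))) by (apply lt_0_INR, lt_O_fact).
  assert (0 < INR (S (2 * m))) by (apply lt_0_INR; lia).
  field; repeat split; try apply pow_nonzero; lra.
Qed.

Lemma gg_eq n p : gbinom (p / 2) n * gbinom (- (p / 2)) n = prodP n (p ^ 2) / ((-4) ^ n * INR (fact n) ^ 2).
Proof.
  unfold gbinom. replace (p^2) with (4 * (p/2)^2) by field. rewrite <- (falling_prod n (p/2)).
  assert (INR (fact n) <> 0) by apply INR_fact_neq_0.
  assert ((-4) ^ n <> 0) by (apply pow_nonzero; lra).
  field. auto.
Qed.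

Theorem corollary1 (n k : nat) (hk : (1 <= k)%nat) :
  polyCauchy2 (Z.of_nat k) (2 * n) =
  (-4) ^ n * (INR (fact n)) ^ 2 *
  cube_int k (fun xs => gbinom (prodR xs / 2) n * gbinom (- (prodR xs / 2)) n).
Proof.
  set (C := (-4) ^ n * INR (fact n) ^ 2).
  assert (HC : C <> 0).
  { unfold C. apply Rmult_integral_contrapositive. split. apply pow_nonzero; lra.
    apply pow_nonzero, INR_fact_neq_0. }
  unfold polyCauchy2.
  rewrite (Derive_n_ext_loc _ (PSeries (bb k))).
  2:{ assert (P : 0 < 1/4) by lra. exists (mkposreal _ P). intros y Hy. apply g_eq.
      change (Rabs (y - 0) < 1/4) in Hy. rewrite Rminus_0_r in Hy. exact Hy. }
  rewrite Derive_n_PSeries.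
  2:{ rewrite Rabs_R0. eapply Rbar_lt_le_trans; [|apply radius_bb]. simpl. lra. }
  rewrite PSeries_0. unfold PS_derive_n. rewrite Nat.add_0_l. simpl (fact 0). simpl (INR 1).
  rewrite (cube_int_ext k _ (fun xs => sum_f_R0 (fun m => (INR (fact (2 * n)) * cf (2 * n) m / C) * (1 * prodR xs) ^ (2 * m)) (2 * n))).
  2:{ intros xs. rewrite gg_eq. fold C. rewrite (prodP_sum n _ (2 * n)) by lia.
      unfold Rdiv at 1. rewrite Rmult_comm, scal_sum. apply sum_eq. intros m _.
      rewrite Rmult_1_l, pow_mult. unfold Rdiv. ring. }
  rewrite cube_poly. unfold bb. rewrite scal_sum, scal_sum. apply sum_eq. intros m _.
  unfold alpha. rewrite pow1. field. split; auto. apply pow_nonzero. 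
  assert (0 < INR (S (2 * m))) by (apply lt_0_INR; lia). lra.
Qed.
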